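(* Let $G=(V,E)$ with weight $\mu$ be an infinite, connected, locally finite weighted graph satisfying condition $(p_0)$, let $m>1$, and fix $o\in V$. Let $(p,q)\in G_2=\{(p,q)\in\mathbb R^2: q\ge m\}$. Suppose there exist constants $C>0$ and $n_1$ such that $$W_o(n)\le C\, n^{m}(\ln n)^{m-1}\quad\text{for all } n\ge n_1.$$ Then the inequality $\Delta_m u+u^p|\nabla u|^q\le 0$ on $V$ admits no nontrivial positive solution.
   Context: Setting: $G=(V,E)$ is an infinite, connected, locally finite graph with no loops and no multiple edges; $x\sim y$ means $x$ and $y$ are joined by an edge. A weight is a symmetric function $\mu:V\times V\to[0,\infty)$ with $\mu_{xy}=\mu_{yx}>0$ if and only if $x\sim y$; the vertex measure is $\mu(x)=\sum_{y\sim x}\mu_{xy}$. For $m>1$ and $u:V\to\mathbb R$, $\Delta_m u(x)=\frac{1}{\mu(x)}\sum_{y\sim x}\mu_{xy}|u(y)-u(x)|^{m-2}(u(y)-u(x))$ and $|\nabla u(x)|=\big(\sum_{y\sim x}\frac{\mu_{xy}}{2\mu(x)}(u(y)-u(x))^2\big)^{1/2}$. Condition $(p_0)$: there is a constant $p_0>1$ such that $\mu_{xy}/\mu(x)\ge 1/p_0$ for all $x\sim y$. $d(x,y)$ is the graph (shortest path) distance, $B(o,n)=\{x\in V: d(o,x)\le n\}$, and $W_o(n)=\sum_{x\in B(o,n),\,y\in V,\,d(o,x)<d(o,y)}\mu_{xy}$. A nontrivial positive solution of $\Delta_m u+u^p|\nabla u|^q\le 0$ is a non-constant function $u:V\to(0,\infty)$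 such that $\Delta_m u(x)+u(x)^p|\nabla u(x)|^q\le 0$ for every $x\in V$, with the conventions $0^0=1$, $0^q=0$ for $q>0$, and, for $q<0$, $|\nabla u(x)|^q=+\infty$ when $|\nabla u(x)|=0$ (so the inequality fails at such $x$). *)

(* Defs.v *)
From HB Require Import structures.
From mathcomp Require Import all_boot all_order all_algebra.
From mathcomp Require Import all_classical all_reals all_analysis.
Set Implicit Arguments. Unset Strict Implicit. Unset Printing Implicit Defensive.
Import Order.TTheory GRing.Theory Num.Theory.
Local Open Scope classical_set_scope.
Local Open Scope ring_scope.

Section Graph.
Variable V : choiceType.
Variable adj : V -> V -> Prop.

Inductive walk : V -> V -> nat -> Prop :=
| walk0 x : walk x x 0
| walkS x y z n : adj x y -> walk y z n -> walk x z n.+1.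

Definition simple_graph : Prop :=
  (forall x, ~ adj x x) /\ (forall x y, adj x y -> adj y x).
Definition locally_finite : Prop := forall x, finite_set [set y | adj x y].
Definition graph_connected : Prop := forall x y, exists n, walk x y n.
Definition infinite_graph : Prop := infinite_set [set: V].

(* graph (shortest path) distance; 0 if no path (never happens when connected) *)
Definition dist (x y : V) : nat :=
  match pselect (exists n, `[< walk x y n >]) with
  | left P => ex_minn P
  | right _ => 0%N
  end.

Definition ball (o : V) (n : nat) : set V := [set x | (dist o x <= n)%N].

Variable R : realType.
Variable mu : V -> V -> R.

Definition is_weight : Prop :=
  (forall x y, mu x y = mu y x) /\ (forall x y, 0 <= mu x y) /\
  (forall x y, 0 < mu x y <-> adj x y).

Definition vmeas (x : V) : R := \sum_(y \in [set y | adj x y]) mu x y.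

Definition cond_p0 : Prop :=
  exists p0 : R, 1 < p0 /\ forall x y, adj x y -> 1 / p0 <= mu x y / vmeas x.

Definition mLap (m : R) (u : V -> R) (x : V) : R :=
  (vmeas x)^-1 * \sum_(y \in [set y | adj x y])
      (mu x y * (`|u y - u x| `^ (m - 2)) * (u y - u x)).

Definition grad_norm (u : V -> R) (x : V) : R :=
  Num.sqrt (\sum_(y \in [set y | adj x y])
              (mu x y / (2 * vmeas x) * (u y - u x) ^+ 2)).

Definition W (o : V) (n : nat) : R :=
  \sum_(x \in ball o n) \sum_(y \in [set y | (dist o x < dist o y)%N]) mu x y.

(* Delta_m u(x) + u(x)^p |nabla u(x)|^q <= 0, with the convention that for
   q < 0 and |nabla u(x)| = 0 the term is +oo (inequality fails).  For q > 0,
   powR gives 0^q = 0; for q = 0, powR gives 0^0 = 1. *)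
Definition ineq_at (m p q : R) (u : V -> R) (x : V) : Prop :=
  if (q < 0) && (grad_norm u x == 0) then False
  else mLap m u x + u x `^ p * grad_norm u x `^ q <= 0.

Definition nontrivial_positive_solution (m p q : R) (u : V -> R) : Prop :=
  (forall x, 0 < u x) /\ (exists x y, u x != u y) /\
  (forall x, ineq_at m p q u x).
End Graph.

(* Main.v *)
Require Import Defs.
From HB Require Import structures.
From mathcomp Require Import all_boot all_order all_algebra.
From mathcomp Require Import all_classical all_reals all_analysis.
From mathcomp Require Import ring lra.
Set Implicit Arguments. Unset Strict Implicit. Unset Printing Implicit Defensive.
Import Order.TTheory GRing.Theory Num.Theory.
Local Open Scope classical_set_scope.
Local Open Scope ring_scope.
Section RealLemmas.
Variable R : realType.
Implicit Types (a b x y t : R).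

Lemma eq_leR (x y : R) : x = y -> x <= y. Proof. by move=> ->. Qed.

Lemma eq_le_eq (a b c d : R) : a = b -> c = d -> b <= c -> a <= d.
Proof. by move=> -> ->. Qed.

Definition psi (m t : R) : R := `|t| `^ (m - 2) * t.

Lemma psi_mul m t : 0 < m -> psi m t * t = `|t| `^ m.
Proof.
move=> m0; rewrite /psi -mulrA -expr2 -real_normK ?num_real// -(powR_mulrn _ (normr_ge0 t)).
rewrite -powRD; first by congr (_ `^ _); lra.
by apply/implyP => /eqP; lra.
Qed.

Lemma norm_psi m t : 1 < m -> `|psi m t| = `|t| `^ (m - 1).
Proof.
move=> m1; rewrite /psi normrM ger0_norm ?powR_ge0//.
rewrite -{2}(powRr1 (normr_ge0 t)) -powRD.
  by congr (_ `^ _); lra.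
by apply/implyP => /eqP; lra.
Qed.

Lemma psiN m t : psi m (- t) = - psi m t.
Proof. by rewrite /psi normrN mulrN. Qed.

Lemma psi_ge0 m t : 0 <= t -> 0 <= psi m t.
Proof. by move=> t0; rewrite /psi mulr_ge0 ?powR_ge0. Qed.

Lemma psi_le0 m t : t <= 0 -> psi m t <= 0.
Proof. by move=> t0; rewrite /psi mulr_ge0_le0 ?powR_ge0. Qed.

Lemma psi_pos m t : 1 < m -> 0 <= t -> psi m t = t `^ (m - 1).
Proof.
move=> m1 t0; rewrite -[LHS]ger0_norm ?psi_ge0// norm_psi// ger0_norm//.
Qed.

Lemma psi_le m s t : 1 < m -> 0 <= s <= t -> psi m s <= psi m t.
Proof.
move=> m1 /andP[s0 st]; rewrite !psi_pos//; last exact: le_trans st.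
by apply: ge0_ler_powR => //; rewrite ?nnegrE//; [lra|exact: le_trans st].
Qed.

Lemma powR_diff (m a b : R) : 1 <= m -> 0 <= b <= a ->
  a `^ m - b `^ m <= 2 * m * a `^ (m - 1) * (a - b).
Proof.
move=> m1 /andP[b0 ba].
have [a0|a0] := eqVneq a 0.
  have b00 : b = 0 by apply/eqP; rewrite eq_le b0 -a0 ba.
  by rewrite a0 b00 !subrr mulr0.
have apos : 0 < a by rewrite lt_def a0 (le_trans b0 ba).
have am : a `^ m = a * a `^ (m - 1) by rewrite mulr_powRB1// ?ltW//; lra.
have am0 : 0 <= a `^ (m - 1) by apply: powR_ge0.
have [hb|hb] := leP (2 * b) a.
  rewrite am; have : 0 <= b `^ m by apply: powR_ge0.
  move=> bm0.
  have h1 : a <= 2 * m * (a - b) by nra.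
  nra.
have bpos : 0 < b by lra.
pose t := b / a.
have tpos : 0 < t by rewrite divr_gt0.
have bt : b = t * a by rewrite /t divfK// gt_eqF.
have btm : b `^ m = t `^ m * a `^ m by rewrite bt powRM// ltW.
have tm : 1 + m * ln t <= t `^ m.
  rewrite /powR gt_eqF//; exact: expR_ge1Dx.
have lnt : - (2 * (a - b) / a) <= ln t.
  have : ln (a / b) <= a / b - 1.
    have h00 : 0 < a / b by rewrite divr_gt0.
    have h0 : -1 < a / b - 1 by lra.
    by have := le_ln1Dx h0; rewrite addrC subrK.
  have -> : a / b = t^-1 by rewrite /t invf_div.
  rewrite lnV ?posrE// => h.
  have e1 : t^-1 - 1 = (a - b) / b by rewrite /t invf_div mulrBl divff ?gt_eqF.
  have e2 : (a - b) / b <= 2 * (a - b) / a.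
    rewrite ler_pdivrMr// mulrAC ler_pdivlMr// ; nra.
  lra.
have : 1 - 2 * m * (a - b) / a <= t `^ m.
  apply: le_trans tm.
  have -> : 2 * m * (a - b) / a = m * (2 * (a - b) / a) by rewrite !mulrA (mulrC m 2).
  have : 0 <= m by lra.
  nra.
rewrite btm => h2.
have key : a `^ m - t `^ m * a `^ m <= a `^ m * (2 * m * (a - b) / a).
  have : 0 <= a `^ m by apply: powR_ge0.
  nra.
apply: (le_trans key).
rewrite am.
have -> : a * a `^ (m - 1) * (2 * m * (a - b) / a) = 2 * m * a `^ (m - 1) * (a - b).
  by field; rewrite gt_eqF.
done.
Qed.

Lemma young_like (m X Y A : R) : 1 < m -> 0 <= X -> 0 <= Y -> 0 < A ->
  X `^ (m - 1) * Y <= X `^ m / A + A `^ (m - 1) * Y `^ m.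
Proof.
move=> m1 X0 Y0 A0.
have Xm0 : 0 <= X `^ m / A by rewrite divr_ge0 ?powR_ge0// ltW.
have Ym0 : 0 <= A `^ (m - 1) * Y `^ m by rewrite mulr_ge0 ?powR_ge0.
have [h|h] := leP X (A * Y).
  have : X `^ (m - 1) <= (A * Y) `^ (m - 1).
    apply: (ge0_ler_powR _ _ _ h); rewrite ?nnegrE//.
    - lra.
    - by rewrite mulr_ge0// ltW.
  rewrite (powRM _ (ltW A0) Y0) => h2.
  have : X `^ (m - 1) * Y <= A `^ (m - 1) * Y `^ (m - 1) * Y by apply: ler_wpM2r.
  rewrite -mulrA [Y `^ _ * Y]mulrC mulr_powRB1//; last by lra.
  move=> h3; lra.
have hY : Y <= X / A by rewrite ler_pdivlMr// mulrC ltW.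
have : X `^ (m - 1) * Y <= X `^ (m - 1) * (X / A) by apply: ler_wpM2l; rewrite ?powR_ge0.
rewrite mulrA [X `^ _ * X]mulrC mulr_powRB1//; last by lra.
move=> h3; lra.
Qed.

End RealLemmas.
Section Pair.
Variable R : realType.

Definition Kc (m M : R) := 2 * m * M * (4 * m * M) `^ (m - 1).

Lemma cacc_pair_le (m M px py wx wy : R) : 1 < m -> 0 < M -> 0 <= py <= px ->
  0 <= wx <= M -> 0 <= wy <= M ->
  px `^ m * `|wy - wx| `^ m / 2 - Kc m M * `|px - py| `^ m <=
  psi m (wy - wx) * (px `^ m * (M - wx) - py `^ m * (M - wy)).
Proof.
move=> m1 M0 /andP[py0 pyx] /andP[wx0 wxM] /andP[wy0 wyM].
set d := wy - wx.
set rx := px `^ m; set ry := py `^ m.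
have px0 : 0 <= px by apply: le_trans pyx.
have ryx : ry <= rx by apply: (ge0_ler_powR _ _ _ pyx); rewrite ?nnegrE//; lra.
have eT : psi m d * (rx * (M - wx) - ry * (M - wy)) =
   rx * (psi m d * d) + psi m d * (M - wy) * (rx - ry).
  by rewrite /d; ring.
rewrite eT psi_mul; last by lra.
set Z := psi m d * (M - wy) * (rx - ry).
have hZ : - (`|d| `^ (m - 1) * M * (rx - ry)) <= Z.
  have : `|Z| <= `|d| `^ (m - 1) * M * (rx - ry).
    rewrite /Z -mulrA normrM norm_psi// -mulrA ler_wpM2l ?powR_ge0//.
    rewrite normrM (ger0_norm (x := rx - ry)) ?subr_ge0//.
    rewrite ler_wpM2r ?subr_ge0// ger0_norm; lra.
  rewrite ler_norml => /andP[]; done.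
have hr : rx - ry <= 2 * m * px `^ (m - 1) * (px - py).
  by apply: powR_diff; [lra|rewrite py0 pyx].
set X := `|d| * px.
have eX : X `^ (m - 1) = `|d| `^ (m - 1) * px `^ (m - 1) by rewrite /X powRM.
have eXm : X `^ m = `|d| `^ m * rx by rewrite /X powRM.
have dm0 : 0 <= `|d| `^ (m - 1) by apply: powR_ge0.
have hb : `|d| `^ (m - 1) * M * (rx - ry) <= 2 * m * M * (X `^ (m - 1) * (px - py)).
  rewrite eX.
  have : `|d| `^ (m - 1) * M * (rx - ry) <= `|d| `^ (m - 1) * M * (2 * m * px `^ (m - 1) * (px - py)).
    by rewrite ler_wpM2l// mulr_ge0//; lra.
  move=> h; apply: (le_trans h); apply: eq_leR; ring.
have A0 : 0 < 4 * m * M by rewrite !mulr_gt0//; lra.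
have pp : 0 <= px - py by rewrite subr_ge0.
have hy := young_like m1 (mulr_ge0 (normr_ge0 d) px0) pp A0.
rewrite -/X in hy.
rewrite (ger0_norm pp).
have e1 : 2 * m * M * (X `^ m / (4 * m * M)) = X `^ m / 2.
  by field; rewrite !gt_eqF//; lra.
have hb2 : `|d| `^ (m - 1) * M * (rx - ry) <= X `^ m / 2 + Kc m M * (px - py) `^ m.
  apply: (le_trans hb); rewrite -e1 /Kc.
  have c0 : 0 <= 2 * m * M by rewrite !mulr_ge0//; lra.
  have := ler_wpM2l c0 hy; move=> h; apply: (le_trans h); apply: eq_leR; ring.
rewrite eXm in hb2.
have : rx * `|d| `^ m = `|d| `^ m * rx by rewrite mulrC.
lra.
Qed.

Lemma cacc_pair (m M px py wx wy : R) : 1 < m -> 0 < M -> 0 <= px -> 0 <= py ->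
  0 <= wx <= M -> 0 <= wy <= M ->
  Num.max (px `^ m) (py `^ m) * `|wy - wx| `^ m / 2 - Kc m M * `|px - py| `^ m <=
  psi m (wy - wx) * (px `^ m * (M - wx) - py `^ m * (M - wy)).
Proof.
move=> m1 M0 px0 py0 hx hy.
have [h|h] := leP py px.
  have rr : py `^ m <= px `^ m by apply: (ge0_ler_powR _ _ _ h); rewrite ?nnegrE//; lra.
  by rewrite (max_idPl rr); apply: cacc_pair_le => //; rewrite py0 h.
have h2 : px <= py by apply: ltW.
have rr : px `^ m <= py `^ m by apply: (ge0_ler_powR _ _ _ h2); rewrite ?nnegrE//; lra.
rewrite (max_idPr rr).
have := @cacc_pair_le m M py px wy wx m1 M0 _ hy hx.
rewrite px0 h2 => /(_ isT).
rewrite distrC (distrC px) -(opprB wy) psiN.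
have -> : - psi m (wy - wx) * (py `^ m * (M - wy) - px `^ m * (M - wx)) =
  psi m (wy - wx) * (px `^ m * (M - wx) - py `^ m * (M - wy)) by ring.
done.
Qed.
End Pair.
Lemma fsum_seq (R : realType) (T : choiceType) (A : set T) (f : T -> R) (s : seq T) :
  uniq s -> (forall y, A y -> f y != 0 -> y \in s) ->
  \sum_(y \in A) f y = \sum_(y <- s) (if y \in A then f y else 0).
Proof.
move=> us hs; rewrite fsbig_mkcond.
rewrite -(fsbig_widen [set` s] [set: T]) //; last first.
  move=> x [_ /= xs]; rewrite /patch /=; case: ifP => // /set_mem Ax.
  by case: (eqVneq (f x) 0) => // /(hs _ Ax).
by rewrite -fsbig_seq.
Qed.

Section Graph.
Variables (V : choiceType) (adj : V -> V -> Prop).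
Hypothesis Hsym : forall x y, adj x y -> adj y x.
Hypothesis Hconn : graph_connected adj.
Hypothesis Hlf : locally_finite adj.

Lemma walk_dist x y : walk adj x y (dist adj x y).
Proof.
rewrite /dist; case: pselect => [P|nP].
  by case: ex_minnP => n /asboolP.
by exfalso; apply: nP; have [n h] := Hconn x y; exists n; apply/asboolP.
Qed.

Lemma dist_min x y n : walk adj x y n -> (dist adj x y <= n)%N.
Proof.
move=> w; rewrite /dist; case: pselect => [P|nP].
  by case: ex_minnP => k _ /(_ n); apply; apply/asboolP.
by exfalso; apply: nP; exists n; apply/asboolP.
Qed.

Lemma walk_snoc x y z n : walk adj x y n -> adj y z -> walk adj x z n.+1.
Proof.
elim=> [a az|a b c k ab _ IH cz]; first by apply: walkS az (walk0 _ _).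
by apply: walkS ab (IH cz).
Qed.

Lemma dist_adj o x y : adj x y -> (dist adj o y <= (dist adj o x).+1)%N.
Proof. by move=> xy; apply: dist_min; apply: walk_snoc (walk_dist _ _) xy. Qed.

Lemma dist_adj2 o x y : adj x y ->
  (dist adj o y <= (dist adj o x).+1)%N /\ (dist adj o x <= (dist adj o y).+1)%N.
Proof. by move=> xy; split; apply: dist_adj => //; apply: Hsym. Qed.

Lemma walk0_eq x y : walk adj x y 0 -> x = y.
Proof. by move=> w; inversion w. Qed.

Lemma walk_first x y n : walk adj x y n.+1 -> exists z, adj x z /\ walk adj z y n.
Proof. by move=> w; inversion w; subst; exists y0. Qed.

Lemma ball_finite n c : finite_set (Defs.ball adj c n).
Proof.
elim: n c => [|n IH] c.
  apply: (sub_finite_set (B := [set c])); last exact: finite_set1.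
  move=> x; rewrite /Defs.ball /= leqn0 => /eqP d0.
  by have := walk_dist c x; rewrite d0 => /walk0_eq <-.
apply: (sub_finite_set (B := [set c] `|` \bigcup_(z in [set z | adj c z]) Defs.ball adj z n)).
  move=> x; rewrite /Defs.ball /=.
  have := walk_dist c x; case: (dist adj c x) => [/walk0_eq <-|k]; first by left.
  move=> /walk_first [z [cz zx]] kn; right; exists z => //=.
  by apply: leq_trans (dist_min zx) kn.
rewrite finite_setU; split; first exact: finite_set1.
by apply: bigcup_finite => //; apply: Hlf.
Qed.

End Graph.
Lemma sum_ge_term (R : realType) (T : eqType) (s : seq T) (F : T -> R) x :
  uniq s -> x \in s -> (forall y, y \in s -> 0 <= F y) -> F x <= \sum_(y <- s) F y.
Proof.
move=> us xs F0; rewrite (bigD1_seq x)//= ler_wpDr//.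
by rewrite big_seq_cond sumr_ge0// => i /andP[/F0].
Qed.

Section Cacc.
Variables (R : realType) (V : choiceType) (adj : V -> V -> Prop) (mu : V -> V -> R).
Hypothesis mu_sym : forall x y, mu x y = mu y x.
Hypothesis mu_ge0 : forall x y, 0 <= mu x y.
Hypothesis mu_adj : forall x y, 0 < mu x y <-> adj x y.
Variables (m M : R) (w : V -> R).
Hypothesis m1 : 1 < m.
Hypothesis M0 : 0 < M.
Hypothesis wb : forall x, 0 <= w x <= M.
Hypothesis Hsup : forall x, \sum_(y \in [set y | adj x y]) mu x y * psi m (w y - w x) <= 0.

Lemma mu_nadj x y : ~ adj x y -> mu x y = 0.
Proof.
move=> nxy; apply/eqP; rewrite eq_le mu_ge0 andbT leNgt; apply/negP => /mu_adj.
exact: nxy.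
Qed.

Lemma cacc (s : seq V) (phi : V -> R) x0 y0 :
  uniq s -> (forall x, phi x != 0 -> x \in s /\ forall y, adj x y -> y \in s) ->
  (forall x, 0 <= phi x) -> x0 \in s -> y0 \in s -> phi x0 = 1 -> phi y0 = 1 ->
  mu x0 y0 * `|w y0 - w x0| `^ m / 2 <=
  Kc m M * \sum_(x <- s) \sum_(y <- s) mu x y * `|phi x - phi y| `^ m.
Proof.
move=> us hphi phi0 x0s y0s p0 p1.
pose f x := phi x `^ m * (M - w x).
pose K x y := mu x y * psi m (w y - w x).
have f0 x : 0 <= f x by rewrite /f mulr_ge0 ?powR_ge0// subr_ge0; case/andP: (wb x).
have step1 : \sum_(x <- s) \sum_(y <- s) K x y * f x <= 0.
  rewrite big_seq sumr_le0// => x xs.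
  rewrite -mulr_suml.
  have [px0|pxn0] := eqVneq (phi x) 0.
    have m0' : 0 < m by apply: lt_trans m1.
    have m0 : m != 0 by rewrite gt_eqF.
    by rewrite /f px0 powR0 // mul0r mulr0.
  have [_ nbs] := hphi x pxn0.
  have -> : \sum_(y <- s) K x y = \sum_(y \in [set y | adj x y]) mu x y * psi m (w y - w x).
    rewrite (fsum_seq us); last first.
      by move=> y /= xy _; apply: nbs.
    apply: eq_bigr => y _; case: ifPn => // /negP nxy.
    by rewrite /K mu_nadj ?mul0r// => xy; apply: nxy; apply/mem_set.
  by rewrite mulr_le0_ge0 ?Hsup.
have Kanti x y : K y x = - K x y.
  by rewrite /K mu_sym -opprB psiN mulrN.
have step2 : \sum_(x <- s) \sum_(y <- s) K x y * (f x - f y) =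
  2 * \sum_(x <- s) \sum_(y <- s) K x y * f x.
  have e : \sum_(x <- s) \sum_(y <- s) K x y * f y = - \sum_(x <- s) \sum_(y <- s) K x y * f x.
    rewrite exchange_big /= -sumrN; apply: eq_bigr => y _.
    rewrite -sumrN; apply: eq_bigr => x _; by rewrite Kanti mulNr.
  have e2 : \sum_(x <- s) \sum_(y <- s) K x y * (f x - f y) =
    \sum_(x <- s) \sum_(y <- s) K x y * f x - \sum_(x <- s) \sum_(y <- s) K x y * f y.
    rewrite -sumrB; apply: eq_bigr => x _; rewrite -sumrB; apply: eq_bigr => y _.
    by rewrite mulrBr.
  by rewrite e2 e opprK -mulr2n mulr_natl.
pose G x y := mu x y * (Num.max (phi x `^ m) (phi y `^ m) * `|w y - w x| `^ m / 2).
have step3 : \sum_(x <- s) \sum_(y <- s) G x y -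
   Kc m M * \sum_(x <- s) \sum_(y <- s) mu x y * `|phi x - phi y| `^ m <=
   \sum_(x <- s) \sum_(y <- s) K x y * (f x - f y).
  rewrite mulr_sumr -sumrB; apply: ler_sum => x _.
  rewrite mulr_sumr -sumrB; apply: ler_sum => y _.
  rewrite /G /K /f -mulrA.
  have := @cacc_pair _ m M (phi x) (phi y) (w x) (w y) m1 M0 (phi0 x) (phi0 y) (wb x) (wb y).
  move=> h.
  have := ler_wpM2l (mu_ge0 x y) h.
  by move=> h2; apply: eq_le_eq h2; ring.
have G0 x y : 0 <= G x y.
  by rewrite /G mulr_ge0// divr_ge0// mulr_ge0 ?powR_ge0// le_max powR_ge0.
have step4 : mu x0 y0 * `|w y0 - w x0| `^ m / 2 <= \sum_(x <- s) \sum_(y <- s) G x y.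
  have e : mu x0 y0 * `|w y0 - w x0| `^ m / 2 = G x0 y0.
    by rewrite /G p0 p1 powR1 maxxx mul1r mulrA.
  rewrite e; apply: (le_trans (sum_ge_term (F := G x0) us y0s _)) => //.
  apply: (sum_ge_term (F := fun x => \sum_(y <- s) G x y) us x0s).
  by move=> x _; rewrite sumr_ge0.
have : \sum_(x <- s) \sum_(y <- s) G x y -
   Kc m M * \sum_(x <- s) \sum_(y <- s) mu x y * `|phi x - phi y| `^ m <= 0.
  by apply: (le_trans step3); rewrite step2; lra.
lra.
Qed.
End Cacc.
Section Energy.
Variables (R : realType) (V : choiceType) (adj : V -> V -> Prop) (mu : V -> V -> R).
Hypothesis mu_sym : forall x y, mu x y = mu y x.
Hypothesis mu_ge0 : forall x y, 0 <= mu x y.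
Hypothesis mu_adj : forall x y, 0 < mu x y <-> adj x y.
Hypothesis Hsym : forall x y, adj x y -> adj y x.
Hypothesis Hconn : graph_connected adj.
Variables (m : R) (o : V).
Hypothesis m1 : 1 < m.

Local Notation d x := (dist adj o x).
Definition Vout x := \sum_(y \in [set y | (d x < d y)%N]) mu x y.

Lemma Vout_ge0 x : 0 <= Vout x.
Proof. by apply: fsumr_ge0. Qed.

Lemma mu_nadj' x y : ~ adj x y -> mu x y = 0.
Proof.
move=> nxy; apply/eqP; rewrite eq_le mu_ge0 andbT leNgt; apply/negP => /mu_adj.
exact: nxy.
Qed.

Lemma in_set_nat (a : nat -> nat) (b : nat) y :
  (y \in [set y | (b < a y)%N]) = (b < a y)%N.
Proof. by apply/idP/idP => [/set_mem|/mem_set]. Qed.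

Lemma Vout_seq s x : uniq s -> (forall y, adj x y -> y \in s) ->
  Vout x = \sum_(y <- s) (if (d x < d y)%N then mu x y else 0).
Proof.
move=> us nb; rewrite /Vout (fsum_seq us); last first.
  move=> y _ h; apply: nb; apply/mu_adj; rewrite lt_def h mu_ge0.
  done.
apply: eq_bigr => y _.
have -> : (y \in [set y | (d x < d y)%N]) = (d x < d y)%N.
  by apply/idP/idP => [/set_mem|/mem_set].
done.
Qed.

Lemma W_seq s n : uniq s -> (forall x, (d x <= n)%N -> x \in s) ->
  W adj mu o n = \sum_(x <- s) (if (d x <= n)%N then Vout x else 0).
Proof.
move=> us hb; rewrite /W (fsum_seq us); last by move=> x /= xb _; apply: hb.
apply: eq_bigr => x _; congr (if _ then _ else _).
by apply/idP/idP => [/set_mem|/mem_set].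
Qed.

Lemma energy_bound (D F : nat -> R) s : uniq s ->
  (forall k, 0 <= D k) -> (forall k, `|F k - F k.+1| <= D k) ->
  (forall x, x \in s -> D (d x) != 0 -> forall y, adj x y -> y \in s) ->
  \sum_(x <- s) \sum_(y <- s) mu x y * `|F (d x) - F (d y)| `^ m <=
  2 * \sum_(x <- s) D (d x) `^ m * Vout x.
Proof.
move=> us D0 FD hs.
have m0 : m != 0 by rewrite gt_eqF//; apply: lt_trans m1.
have m0' : 0 <= m by apply: ltW; apply: lt_trans m1.
pose A x y := if (d x < d y)%N then mu x y * D (d x) `^ m else 0.
have pt x y : mu x y * `|F (d x) - F (d y)| `^ m <= A x y + A y x.
  have [xy|nxy] := pselect (adj x y); last first.
    rewrite mu_nadj' // mul0r /A.
    by rewrite addr_ge0//; case: ifP => // _; rewrite mulr_ge0 ?powR_ge0.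
  have [h1 h2] := dist_adj2 Hsym Hconn o xy.
  rewrite /A; case: ltngtP => [lt|gt|eq].
  - have e : d y = (d x).+1 by apply/eqP; rewrite eqn_leq h1 lt.
    rewrite addr0 e ler_wpM2l //.
    by apply: (ge0_ler_powR m0' _ _ (FD _)); rewrite ?nnegrE.
  - have e : d x = (d y).+1 by apply/eqP; rewrite eqn_leq h2 gt.
    rewrite add0r e mu_sym distrC ler_wpM2l //.
    by apply: (ge0_ler_powR m0' _ _ (FD _)); rewrite ?nnegrE.
  - by rewrite eq subrr normr0 powR0 // mulr0 addr0.
have s1 : \sum_(x <- s) \sum_(y <- s) mu x y * `|F (d x) - F (d y)| `^ m <=
    \sum_(x <- s) \sum_(y <- s) A x y + \sum_(x <- s) \sum_(y <- s) A y x.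
  rewrite -big_split; apply: ler_sum => x _; rewrite -big_split; apply: ler_sum => y _.
  exact: pt.
have s2 : \sum_(x <- s) \sum_(y <- s) A y x = \sum_(x <- s) \sum_(y <- s) A x y.
  by rewrite exchange_big.
have s3 : \sum_(x <- s) \sum_(y <- s) A x y = \sum_(x <- s) D (d x) `^ m * Vout x.
  rewrite big_seq [RHS]big_seq; apply: eq_bigr => x xs.
  have [Dx0|Dxn0] := eqVneq (D (d x)) 0.
    rewrite Dx0 powR0 // mul0r big1 // => y _; rewrite /A; case: ifP => // _.
    by rewrite Dx0 powR0 // mulr0.
  rewrite (Vout_seq us (hs x xs Dxn0)) mulr_sumr; apply: eq_bigr => y _.
  by rewrite /A; case: ifP => _; rewrite ?mulr0 // mulrC.
by rewrite s2 s3 -mulr2n -mulr_natl in s1.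
Qed.

Lemma block_bound (D : nat -> R) (r : seq nat) (c : nat -> R) (b : nat -> nat) s :
  uniq s -> (forall j, 0 <= c j) ->
  (forall k, D k `^ m <= \sum_(j <- r) (if (k <= b j)%N then c j else 0)) ->
  (forall j x, j \in r -> (d x <= b j)%N -> x \in s) ->
  \sum_(x <- s) D (d x) `^ m * Vout x <= \sum_(j <- r) c j * W adj mu o (b j).
Proof.
move=> us c0 hD hb.
apply: (@le_trans _ _ (\sum_(x <- s) \sum_(j <- r) (if (d x <= b j)%N then c j else 0) * Vout x)).
  apply: ler_sum => x _; rewrite -mulr_suml; apply: ler_wpM2r => //; exact: Vout_ge0.
rewrite exchange_big /= big_seq [X in _ <= X]big_seq; apply: ler_sum => j jr.
rewrite (W_seq us (fun x => hb j x jr)) mulr_sumr; apply: ler_sum => x _.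
by case: ifP => _; rewrite ?mul0r ?mulr0.
Qed.

End Energy.
Section Construct.
Variable R : realType.
Variables (m c : R) (J J' : nat).
Hypothesis m1 : 1 < m.
Hypothesis c0 : 0 < c.

Let lg k := trunc_log 2 k.

Definition Dk (k : nat) : R :=
  if (0 < k)%N && (J <= lg k < J')%N then c / ((lg k).+1%:R * (2 ^ lg k)%:R) else 0.

Definition cj (j : nat) : R := (c / (j.+1%:R * (2 ^ j)%:R)) `^ m.

Definition Fk (k : nat) : R := Num.max 0 (1 - \sum_(0 <= i < k) Dk i).

Lemma Dk_ge0 k : 0 <= Dk k.
Proof. by rewrite /Dk; case: ifP => // _; rewrite divr_ge0 // ltW. Qed.

Lemma cj_ge0 j : 0 <= cj j.
Proof. exact: powR_ge0. Qed.

Lemma Dk_block k : Dk k `^ m <= \sum_(J <= j < J') (if (k <= 2 ^ j.+1)%N then cj j else 0).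
Proof.
have m0 : m != 0 by rewrite gt_eqF//; apply: lt_trans m1.
rewrite /Dk; case: ifPn => [/andP[k0 /andP[Jl lJ]]|_].
  have kin : (lg k \in index_iota J J') by rewrite mem_index_iota Jl lJ.
  apply: le_trans (sum_ge_term (F := fun j => if (k <= 2 ^ j.+1)%N then cj j else 0)
     (iota_uniq _ _) kin _).
    by rewrite ltnW ?trunc_log_ltn.
  by move=> y _; case: ifP => // _; apply: cj_ge0.
rewrite powR0 //; apply: sumr_ge0 => j _; case: ifP => // _; exact: cj_ge0.
Qed.

Lemma max0_lip (a b : R) : 0 <= b -> `|Num.max 0 a - Num.max 0 (a - b)| <= b.
Proof.
move=> b0.
have [h1|h1] := leP 0 a; have [h2|h2] := leP 0 (a - b);
  by rewrite ler_norml; apply/andP; split; lra.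
Qed.

Lemma FD k : `|Fk k - Fk k.+1| <= Dk k.
Proof.
by rewrite /Fk big_nat_recr //= opprD addrA max0_lip // Dk_ge0.
Qed.

Lemma Fk_ge0 k : 0 <= Fk k.
Proof. by rewrite /Fk le_max lexx. Qed.

Lemma Dk_small i : (i < 2 ^ J)%N -> Dk i = 0.
Proof.
move=> iJ; rewrite /Dk; case: ifPn => // /andP[i0 /andP[Jl _]].
have := trunc_logP (isT : (1 < 2)%N) i0; rewrite -/(lg i) => h.
have : (2 ^ J <= i)%N by apply: leq_trans h; rewrite leq_exp2l.
by rewrite leqNgt iJ.
Qed.

Lemma Fk_one k : (k <= 2 ^ J)%N -> Fk k = 1.
Proof.
move=> kJ; rewrite /Fk big_nat_cond big1 ?subr0 ?max_r //.
move=> i /andP[/andP[_ ik] _]; apply: Dk_small; exact: leq_trans ik kJ.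
Qed.

Lemma sumDk n : (n <= J')%N ->
  \sum_(0 <= i < 2 ^ n) Dk i = \sum_(0 <= j < n) (if (J <= j)%N then c / j.+1%:R else 0).
Proof.
elim: n => [|n IH] nJ.
  by rewrite expn0 big_nat1 big_geq // /Dk.
rewrite big_nat_recr //= -IH; last exact: ltnW.
rewrite (@big_cat_nat _ _ _ (2 ^ n)) //=; last by rewrite leq_exp2l.
congr (_ + _).
have e : forall i, (2 ^ n <= i < 2 ^ n.+1)%N ->
    Dk i = if (J <= n)%N then c / (n.+1%:R * (2 ^ n)%:R) else 0.
  move=> i /andP[a b]; have li : lg i = n by apply: trunc_log_eq => //; rewrite a b.
  have i0 : (0 < i)%N by apply: leq_trans a; rewrite expn_gt0.
  by rewrite /Dk li i0 nJ andbT.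
rewrite (eq_big_nat _ _ e) sumr_const_nat expnS mul2n -addnn addnK.
case: ifP => _; last by rewrite mul0rn.
rewrite -[X in X = _]mulr_natr.
by field; rewrite addrC natr1 !pnatr_eq0 expn_eq0.
Qed.

Definition Hs := \sum_(J <= j < J') (j.+1%:R : R)^-1.

Lemma Fk_zero k : c * Hs >= 1 -> (2 ^ J' <= k)%N -> Fk k = 0.
Proof.
move=> cH kJ; rewrite /Fk max_l //.
have : c * Hs <= \sum_(0 <= i < k) Dk i.
  rewrite (@big_cat_nat _ _ _ (2 ^ J')) //= sumDk //.
  have e : c * Hs = \sum_(0 <= j < J') (if (J <= j)%N then c / j.+1%:R else 0).
    have [JJ|JJ] := leqP J J'.
      rewrite (@big_cat_nat _ _ _ J) //= big_nat_cond big1; last first.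
        by move=> i /andP[/andP[_ iJ] _]; rewrite leqNgt iJ.
      rewrite add0r /Hs mulr_sumr; apply: eq_big_nat => i /andP[-> _].
      by rewrite mulrC.
    rewrite /Hs big_geq ?mulr0; last exact: ltnW.
    by rewrite big_nat_cond big1 // => i /andP[/andP[_ iJ'] _]; rewrite leqNgt (ltn_trans iJ').
  rewrite -e ler_wpDr //; apply: sumr_ge0 => i _; exact: Dk_ge0.
lra.
Qed.

End Construct.
Section Cost.
Variable R : realType.

Lemma powRV (x m : R) : 0 <= x -> (x^-1) `^ m = (x `^ m)^-1.
Proof.
move=> x0; rewrite -powR_inv1 // -powRrM mulN1r powRN //.
Qed.

Lemma cost_term (m c C : R) j : 1 < m -> 0 < c ->
  cj m c j * (C * ((2 ^ j.+1)%:R `^ m) * (ln ((2 ^ j.+1)%:R : R)) `^ (m - 1)) =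
  C * 2 `^ m * (ln 2) `^ (m - 1) * c `^ m / j.+1%:R.
Proof.
move=> m1 c0.
set a : R := j.+1%:R; set p : R := (2 ^ j)%:R.
have a0 : 0 < a by rewrite /a ltr0n.
have p0 : 0 < p by rewrite /p ltr0n expn_gt0.
have e2 : (2 ^ j.+1)%:R = 2 * p :> R by rewrite expnS natrM.
have eln : ln ((2 ^ j.+1)%:R : R) = a * ln 2.
  by rewrite natrX lnXn // mulr_natl.
have ln20 : 0 <= ln (2 : R) by apply: ln_ge0; rewrite ler1n.
have ln2p : 0 < ln (2 : R) by apply: ln_gt0; rewrite ltr1n.
rewrite /cj eln e2.
rewrite powRM ?(ltW c0) ?invr_ge0 ?mulr_ge0 ?ltW // powRV ?mulr_ge0 ?ltW //.
rewrite !powRM ?ltW //.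
have am : a `^ m = a * a `^ (m - 1) by rewrite mulr_powRB1 ?ltW //; lra.
rewrite am.
have pm0 : p `^ m != 0 by rewrite gt_eqF // powR_gt0.
have am0 : a `^ (m - 1) != 0 by rewrite gt_eqF // powR_gt0.
by field; rewrite -/p pm0 am0 addrC natr1 pnatr_eq0.
Qed.

Lemma harm_half n : (0 < n)%N -> 2^-1 <= \sum_(n <= i < n.*2) (i.+1%:R : R)^-1.
Proof.
case: n => // n _.
rewrite (@le_trans _ _ (\sum_(n.+1 <= i < n.+1.*2) (n.+1.*2%:R : R)^-1)) //=.
  rewrite sumr_const_nat -addnn addnK addnn -mul2n natrM invfM.
  by rewrite -[_ *+ n.+1]mulr_natr divfK.
by apply: ler_sum_nat => i /andP[? ?]; rewrite lef_pV2 ?qualifE/= ?ler_nat.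
Qed.

Lemma harm_grow J k : (0 < J)%N ->
  k%:R / 2 <= \sum_(J <= i < J * 2 ^ k) (i.+1%:R : R)^-1.
Proof.
move=> J0; elim: k => [|k IH]; first by rewrite mul0r sumr_ge0.
have h1 : (J <= J * 2 ^ k)%N by rewrite leq_pmulr // expn_gt0.
have h2 : (J * 2 ^ k <= J * 2 ^ k.+1)%N by rewrite leq_mul2l expnS leq_pmull ?orbT // expn_gt0.
rewrite (@big_cat_nat _ _ _ (J * 2 ^ k)) //=.
have e : (J * 2 ^ k.+1 = (J * 2 ^ k).*2)%N by rewrite expnS mulnCA mul2n.
rewrite e.
have Jk : (0 < J * 2 ^ k)%N by rewrite muln_gt0 J0 expn_gt0.
have := harm_half Jk.
have : k.+1%:R = k%:R + 1 :> R by rewrite natr1.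
lra.
Qed.

End Cost.
Section Liouville.
Variables (R : realType) (V : choiceType) (adj : V -> V -> Prop) (mu : V -> V -> R).
Hypothesis mu_sym : forall x y, mu x y = mu y x.
Hypothesis mu_ge0 : forall x y, 0 <= mu x y.
Hypothesis mu_adj : forall x y, 0 < mu x y <-> adj x y.
Hypothesis Hsym : forall x y, adj x y -> adj y x.
Hypothesis Hconn : graph_connected adj.
Hypothesis Hlf : locally_finite adj.
Variables (m M C : R) (o : V) (n1 : nat) (w : V -> R).
Hypothesis m1 : 1 < m.
Hypothesis M0 : 0 < M.
Hypothesis C0 : 0 < C.
Hypothesis HW : forall n : nat, (n1 <= n)%N ->
     W adj mu o n <= C * (n%:R `^ m) * (ln (n%:R : R)) `^ (m - 1).
Hypothesis wb : forall x, 0 <= w x <= M.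
Hypothesis Hsup : forall x, \sum_(y \in [set y | adj x y]) mu x y * psi m (w y - w x) <= 0.

Local Notation d x := (dist adj o x).

Lemma liouville x0 y0 : adj x0 y0 -> w x0 = w y0.
Proof.
move=> a0.
have mu0 : 0 < mu x0 y0 by apply/mu_adj.
have m0 : 0 < m by apply: lt_trans m1.
have m10 : 0 < m - 1 by rewrite subr_gt0.
set Q := mu x0 y0 * `|w y0 - w x0| `^ m / 2.
have Q0 : 0 <= Q by rewrite /Q divr_ge0 // mulr_ge0 ?powR_ge0 // ltW.
have [Qz|Qp] := eqVneq Q 0.
  move: Qz; rewrite /Q => /eqP; rewrite mulf_eq0 invr_eq0 pnatr_eq0 orbF mulf_eq0.
  rewrite gt_eqF //= powR_eq0 => /andP[/eqP h _].
  by apply/eqP; rewrite eq_sym -subr_eq0 -normr_eq0 h.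
have Qpos : 0 < Q by rewrite lt_def Qp Q0.
exfalso.
set K0 := C * 2 `^ m * (ln 2) `^ (m - 1).
have K00 : 0 <= K0 by rewrite /K0 !mulr_ge0 ?powR_ge0 // ltW.
set K1 := Kc m M * 2 * K0.
have Kc0 : 0 <= Kc m M by rewrite /Kc !mulr_ge0 ?powR_ge0 // ?(ltW m0) ?(ltW M0).
have K10 : 0 <= K1 by rewrite /K1 mulr_ge0 // mulr_ge0.
set J := (maxn (maxn (d x0) (d y0)) n1).+1.
have J0 : (0 < J)%N by [].
set T := (K1 / Q + 1) `^ ((m - 1)^-1).
have T0 : 0 < T by rewrite /T powR_gt0 // ltr_wpDl // divr_ge0 // ltW.
set k := Num.Def.archi_bound (2 * T).
have kT : 2 * T < k%:R by apply: archi_boundP; rewrite mulr_ge0 // ltW.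
set J' := (J * 2 ^ k)%N.
set H := Hs R J J'.
have HT : T <= H.
  have := harm_grow R k J0; rewrite -/J' => h.
  apply: le_trans h; lra.
have H0 : 0 < H by apply: lt_le_trans HT.
set c := H^-1.
have c0 : 0 < c by rewrite invr_gt0.
have cH : c * H = 1 by rewrite mulVf // gt_eqF.
set L := (2 ^ J')%N.
set N := L.+1.
have bfin := ball_finite Hconn Hlf N o.
set s : seq V := finmap.enum_fset (fset_set (Defs.ball adj o N)).
have us : uniq s by apply: finmap.fset_uniq.
have ins x : (x \in s) = (d x <= N)%N.
  rewrite /s (in_fset_set bfin).
  by apply/idP/idP => [/set_mem|/mem_set].
have JL : (2 ^ J <= L)%N by rewrite leq_exp2l // /J' leq_pmulr // expn_gt0.
have dx0 : (d x0 <= 2 ^ J)%N.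
  apply: leq_trans (ltnW (ltn_expl _ (isT : (1 < 2)%N))).
  by rewrite /J; apply: leqW; rewrite !leq_max leqnn.
have dy0 : (d y0 <= 2 ^ J)%N.
  apply: leq_trans (ltnW (ltn_expl _ (isT : (1 < 2)%N))).
  by rewrite /J; apply: leqW; rewrite !leq_max leqnn !orbT.
pose phi x := Fk c J J' (d x).
have Fz k' : (L <= k')%N -> Fk c J J' k' = 0.
  by move=> h; apply: Fk_zero => //; rewrite cH.
have nbL x y : (d x < L)%N -> adj x y -> y \in s.
  move=> h xy; rewrite ins; apply: leq_trans (dist_adj Hconn o xy) _.
  by rewrite /N ltnS ltnW.
have hphi x : phi x != 0 -> x \in s /\ forall y, adj x y -> y \in s.
  move=> px; have dxL : (d x < L)%N.
    by rewrite ltnNge; apply/negP => /Fz h; move: px; rewrite /phi h eqxx.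
  split; last by move=> y; apply: nbL.
  by rewrite ins /N ltnW // ltnS ltnW.
have x0s : x0 \in s by rewrite ins; apply: leq_trans dx0 _; rewrite /N leqW.
have y0s : y0 \in s by rewrite ins; apply: leq_trans dy0 _; rewrite /N leqW.
have step1 := cacc mu_sym mu_ge0 mu_adj m1 M0 wb Hsup us hphi
  (fun x => Fk_ge0 _ _ _ _) x0s y0s (Fk_one _ _ dx0) (Fk_one _ _ dy0).
rewrite -/Q in step1.
have step2 := energy_bound mu_sym mu_ge0 mu_adj Hsym Hconn (o := o) m1 us
  (Dk_ge0 J J' c0) (FD J J' c0) _.
have hD x : x \in s -> Dk c J J' (d x) != 0 -> forall y, adj x y -> y \in s.
  move=> _ hx y xy; apply: (nbL x) => //.
  move: hx; rewrite /Dk; case: ifP => [/andP[dpos /andP[_ lt]]|]; last by rewrite eqxx.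
  move=> _; apply: leq_trans (trunc_log_ltn _ (isT : (1 < 2)%N)) _.
  by rewrite leq_exp2l.
have {step2} step2 := step2 hD.
have step3 := block_bound (adj := adj) mu_ge0 (o := o) (r := index_iota J J') (c := cj m c)
  (b := fun j => (2 ^ j.+1)%N) us (cj_ge0 m c) (Dk_block c J J' m1).
have hb (j : nat) (x : V) : j \in index_iota J J' -> (d x <= 2 ^ j.+1)%N -> x \in s.
  rewrite mem_index_iota => /andP[_ jJ] h; rewrite ins; apply: leq_trans h _.
  by rewrite /N leqW // leq_exp2l.
have {step3} step3 := step3 hb.
have step4 : \sum_(j <- index_iota J J') cj m c j * W adj mu o (2 ^ j.+1) <=
    K0 * c `^ m * H.
  rewrite /H /Hs mulr_sumr big_seq [X in _ <= X]big_seq; apply: ler_sum => j.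
  rewrite mem_index_iota => /andP[Jj _].
  have hn : (n1 <= 2 ^ j.+1)%N.
    apply: (leq_trans _ (ltnW (ltn_expl _ (isT : (1 < 2)%N)))).
    apply: (leq_trans _ (leqnSn _)); apply: (leq_trans _ Jj).
    by rewrite /J leqW // leq_max leqnn orbT.
  apply: le_trans (ler_wpM2l (cj_ge0 m c j) (HW hn)) _.
  rewrite cost_term // /K0; apply: eq_leR; rewrite /Kc; field.
have main : Q <= K1 * (c `^ m * H).
  apply: (le_trans step1).
  have -> : K1 * (c `^ m * H) = Kc m M * (2 * (K0 * c `^ m * H)).
    by rewrite /K1 -!mulrA.
  apply: ler_wpM2l => //.
  apply: (le_trans step2); apply: ler_wpM2l => //.
  exact: (le_trans step3 step4).
have eH : c `^ m * H = (H `^ (m - 1))^-1.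
  rewrite /c powRV ?ltW // -(mulr_powRB1 (ltW H0) m0).
  by rewrite invfM mulrAC mulVf ?gt_eqF // mul1r.
have Hm : K1 / Q + 1 <= H `^ (m - 1).
  have : T `^ (m - 1) <= H `^ (m - 1).
    by apply: (ge0_ler_powR _ _ _ HT); rewrite ?nnegrE ?ltW // ltW.
  rewrite /T -powRrM mulVf ?powRr1 //; last by rewrite gt_eqF.
  by rewrite addr_ge0 // divr_ge0 // ltW.
have Hmp : 0 < H `^ (m - 1) by rewrite powR_gt0.
rewrite eH in main.
have : Q * H `^ (m - 1) <= K1.
  by rewrite -ler_pdivlMr // ; apply: le_trans main _; rewrite div1r.
have : K1 / Q * Q = K1 by rewrite divfK // gt_eqF.
nra.
Qed.
End Liouville.
Lemma ler_fsum_fin (R : realType) (T : choiceType) (P : set T) (f g : T -> R) :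
  finite_set P -> (forall y, P y -> f y <= g y) ->
  \sum_(y \in P) f y <= \sum_(y \in P) g y.
Proof.
move=> Pf fg; rewrite !fsbig_finite // big_seq [X in _ <= X]big_seq.
apply: ler_sum => y yP.
by apply: fg; move: yP; rewrite in_fset_set // => /set_mem.
Qed.

Lemma walk_diff (R : realType) (V : choiceType) (adj : V -> V -> Prop) (f : V -> R) x y n :
  walk adj x y n -> f x != f y -> exists a b, adj a b /\ f a != f b.
Proof.
elim=> [z|a b c k ab _ IH]; first by rewrite eqxx.
move=> ac; have [e|ne] := eqVneq (f a) (f b).
  by apply: IH; rewrite -e.
by exists a, b.
Qed.

Unset Implicit Arguments.
Set Strict Implicit.

Theorem theorem1p1 (V : choiceType) (adj : V -> V -> Prop) (R : realType)
  (mu : V -> V -> R) (m p q : R) (o : V) (C : R) (n1 : nat) :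
  simple_graph adj -> infinite_graph V -> graph_connected adj -> locally_finite adj ->
  is_weight adj mu -> cond_p0 adj mu ->
  1 < m -> m <= q ->
  0 < C ->
  (forall n : nat, (n1 <= n)%N ->
     W adj mu o n <= C * (n%:R `^ m) * (ln (n%:R : R)) `^ (m - 1)) ->
  ~ exists u : V -> R, nontrivial_positive_solution adj mu m p q u.
Proof.
move=> [Hirr Hsym] Hinf Hconn Hlf [mu_sym [mu_ge0 mu_adj]] _ m1 mq C0 HW.
move=> [u [upos [[a [b uab]] Hineq]]].
have m0 : 0 < m by apply: lt_trans m1.
have nb x : exists z, adj x z.
  have [y yx] : exists y, y != x.
    apply: contrapT => h; apply: Hinf.
    apply: (sub_finite_set (B := [set x])); last exact: finite_set1.
    move=> y _ /=; apply: contrapT => nyx; apply: h; exists y; apply/eqP => e.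
    by apply: nyx; rewrite e.
  have [n wn] := Hconn x y.
  case: n wn => [/walk0_eq e|k /walk_first [z [xz _]]]; last by exists z.
  by move: yx; rewrite e eqxx.
have vpos x : 0 < vmeas adj mu x.
  have [z xz] := nb x.
  have v0 : 0 <= vmeas adj mu x by apply: fsumr_ge0.
  rewrite lt_def v0 andbT; apply/eqP => v00.
  have := pfsumr_eq0 (Hlf x) (fun y _ => mu_ge0 x y) v00 (xz : [set y | adj x y] z).
  by move=> h; have := (proj2 (mu_adj x z) xz); rewrite h ltxx.
have usup x : \sum_(y \in [set y | adj x y]) mu x y * psi m (u y - u x) <= 0.
  have hx := Hineq x; rewrite /ineq_at in hx.
  have qn : (q < 0) = false by apply/negbTE; rewrite -leNgt; apply: ltW; apply: lt_le_trans m0 mq.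
  rewrite qn /= in hx.
  have t0 : 0 <= u x `^ p * grad_norm adj mu u x `^ q by rewrite mulr_ge0 ?powR_ge0.
  have hl : mLap adj mu m u x <= 0 by apply: le_trans hx; rewrite lerDl.
  move: hl; rewrite /mLap pmulr_rle0 ?invr_gt0 //.
  have -> : (\sum_(y \in [set y | adj x y]) mu x y * psi m (u y - u x)) =
    \sum_(y \in [set y | adj x y]) mu x y * `|u y - u x| `^ (m - 2) * (u y - u x).
    by apply: eq_fsbigr => y _; rewrite /psi mulrA.
  done.
set M := Num.max (u a) (u b).
have M0 : 0 < M by rewrite lt_max upos.
pose w x := Num.min (u x) M.
have wb x : 0 <= w x <= M.
  apply/andP; split; first by rewrite /w le_min !ltW ?upos.
  by rewrite /w ge_min lexx orbT.
have wsup x : \sum_(y \in [set y | adj x y]) mu x y * psi m (w y - w x) <= 0.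
  have [uxM|uxM] := leP (u x) M.
    have wx : w x = u x by rewrite /w min_l.
    apply: le_trans (usup x); apply: ler_fsum_fin => [|y _]; first exact: Hlf.
    rewrite wx ler_wpM2l //.
    have [uyM|uyM] := leP (u y) M; first by rewrite /w min_l.
    rewrite /w min_r; last exact: ltW.
    apply: psi_le => //; rewrite subr_ge0 uxM /= lerD2r; exact: ltW.
  have wx : w x = M by rewrite /w min_r // ltW.
  apply: fsumr_le0 => y _; rewrite wx mulr_ge0_le0 // psi_le0 // subr_le0.
  by case/andP: (wb y).
have wab : w a != w b.
  have ha : w a = u a by rewrite /w min_l // le_max lexx.
  have hb : w b = u b by rewrite /w min_l // le_max lexx orbT.
  by rewrite ha hb.
have [n wn] := Hconn a b.
have [x0 [y0 [a0 ne]]] := walk_diff wn wab.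
move: ne; rewrite (liouville mu_sym mu_ge0 mu_adj Hsym Hconn Hlf m1 M0 C0 HW wb wsup a0).
by rewrite eqxx.
Qed.
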